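(* A finite-dimensional complex Lie algebra $\mathfrak{g}$ admits a periodic prederivation of odd order if and only if $\mathfrak{g}$ is nilpotent of class at most two, i.e. $[\mathfrak{g},[\mathfrak{g},\mathfrak{g}]]=0$.
   Context: A linear map $P:\mathfrak{g}\to\mathfrak{g}$ is a prederivation if $P([x,[y,z]])=[P(x),[y,z]]+[x,[P(y),z]]+[x,[y,P(z)]]$ for all $x,y,z\in\mathfrak{g}$. It is periodic if $P^m=\mathrm{id}$ for some integer $m\ge 1$; its order is the smallest such $m$. *)

(* Defs.v *)
From HB Require Import structures.
From mathcomp Require Import all_boot all_order all_algebra.
From mathcomp Require Import complex reals.
Set Implicit Arguments. Unset Strict Implicit. Unset Printing Implicit Defensive.
Import Order.TTheory GRing.Theory Num.Theory.
Local Open Scope ring_scope.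

Definition lie_bracket (K : fieldType) (V : lmodType K) (br : V -> V -> V) : Prop :=
  [/\ (forall (a : K) (x y z : V), br (a *: x + y) z = a *: br x z + br y z),
      (forall (a : K) (x y z : V), br x (a *: y + z) = a *: br x y + br x z),
      (forall x : V, br x x = 0) &
      (forall x y z : V, br x (br y z) + br y (br z x) + br z (br x y) = 0)].

Definition prederivation (K : fieldType) (V : lmodType K) (br : V -> V -> V)
    (P : V -> V) : Prop :=
  (forall (a : K) (x y : V), P (a *: x + y) = a *: P x + P y) /\
  (forall x y z : V,
     P (br x (br y z)) = br (P x) (br y z) + br x (br (P y) z) + br x (br y (P z))).

Definition periodic_of_order (T : Type) (P : T -> T) (m : nat) : Prop :=
  (0 < m)%N /\ (forall x, iter m P x = x) /\
  (forall k, (0 < k < m)%N -> ~ (forall x, iter k P x = x)).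

(* Main.v *)
Require Import Defs.
From HB Require Import structures.
From mathcomp Require Import all_boot all_order all_algebra all_field all_solvable.
From mathcomp Require Import complex reals.
From mathcomp Require Import ring.
Import GRing.Theory Num.Theory.
Local Open Scope ring_scope.

Section Lin.
Variables (K : fieldType) (V : lmodType K) (br : V -> V -> V).
Hypothesis Hbr : lie_bracket br.

Lemma brDl x y z : br (x + y) z = br x z + br y z.
Proof. by move: Hbr; rewrite /lie_bracket => -[H _ _ _]; rewrite -{1}(scale1r x) H scale1r. Qed.
Lemma brDr x y z : br x (y + z) = br x y + br x z.
Proof. by move: Hbr; rewrite /lie_bracket => -[_ H _ _]; rewrite -{1}(scale1r y) H scale1r. Qed.
Lemma br0l z : br 0 z = 0.
Proof.
have H := brDl 0 0 z; rewrite addr0 in H.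
by apply: (@addrI _ (br 0 z)); rewrite addr0 -H.
Qed.
Lemma br0r z : br z 0 = 0.
Proof.
have H := brDr z 0 0; rewrite addr0 in H.
by apply: (@addrI _ (br z 0)); rewrite addr0 -H.
Qed.
Lemma brZl a x z : br (a *: x) z = a *: br x z.
Proof. by move: Hbr; rewrite /lie_bracket => -[H _ _ _]; rewrite -{1}(addr0 (a *: x)) H br0l addr0. Qed.
Lemma brZr a x z : br z (a *: x) = a *: br z x.
Proof. by move: Hbr; rewrite /lie_bracket => -[_ H _ _]; rewrite -{1}(addr0 (a *: x)) H br0r addr0. Qed.
Lemma brsuml (I : Type) (r : seq I) (F : I -> V) z :
  br (\sum_(i <- r) F i) z = \sum_(i <- r) br (F i) z.
Proof. by elim: r => [|i r IH]; rewrite ?big_nil ?big_cons ?br0l // brDl IH. Qed.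
Lemma brsumr (I : Type) (r : seq I) (F : I -> V) z :
  br z (\sum_(i <- r) F i) = \sum_(i <- r) br z (F i).
Proof. by elim: r => [|i r IH]; rewrite ?big_nil ?big_cons ?br0r // brDr IH. Qed.
End Lin.

Section LinP.
Variables (K : fieldType) (V : lmodType K) (P : V -> V).
Hypothesis HP : forall (a : K) (x y : V), P (a *: x + y) = a *: P x + P y.
Lemma PD x y : P (x + y) = P x + P y.
Proof. by rewrite -{1}(scale1r x) HP scale1r. Qed.
Lemma P0 : P 0 = 0.
Proof.
have H := PD 0 0; rewrite addr0 in H.
by apply: (@addrI _ (P 0)); rewrite addr0 -H.
Qed.
Lemma PZ a x : P (a *: x) = a *: P x.
Proof. by rewrite -{1}(addr0 (a *: x)) HP P0 addr0. Qed.
Lemma Psum (I : Type) (r : seq I) (F : I -> V) :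
  P (\sum_(i <- r) F i) = \sum_(i <- r) P (F i).
Proof. by elim: r => [|i r IH]; rewrite ?big_nil ?big_cons ?P0 // PD IH. Qed.
Lemma iterZ k a x : iter k P (a *: x) = a *: iter k P x.
Proof. by elim: k => [|k IH] //=; rewrite IH PZ. Qed.
End LinP.

Lemma prim_exists (C : numClosedFieldType) n : (n > 0)%N ->
  exists z : C, n.-primitive_root z.
Proof.
pose p : {poly C} := 'X^n - 1; have [r Dp] := closed_field_poly_normal p.
move=> n_gt0; rewrite (monicP _) ?monicXnsubC // scale1r in Dp.
have rn1: all n.-unity_root r by apply/allP=> z; rewrite -root_prod_XsubC -Dp.
have sz_r: (n < (size r).+1)%N.
  by rewrite -(size_prod_XsubC r id) -Dp size_XnsubC.
have [|z] := hasP (has_prim_root n_gt0 rn1 _ sz_r); last by exists z.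
by rewrite -separable_prod_XsubC -Dp separable_Xn_sub_1 // pnatr_eq0 -lt0n.
Qed.

Lemma shift_sum (V : zmodType) (f : nat -> V) m :
  f m = f 0%N -> \sum_(0 <= k < m) f k.+1 = \sum_(0 <= k < m) f k.
Proof.
move=> Hm.
have H := @big_nat_recl V 0 +%R m 0 f (leq0n m); rewrite big_nat_recr //= Hm addrC in H.
by apply: (@addrI _ (f 0%N)); rewrite H.
Qed.

Lemma decomp (K : fieldType) (V : lmodType K) (P : V -> V) m (z : K) :
  (forall a x y, P (a *: x + y) = a *: P x + P y) ->
  (forall x, iter m P x = x) -> m.-primitive_root z -> m%:R != 0 :> K ->
  forall x, exists F : 'I_m -> V, x = \sum_(j < m) F j /\
     forall j, exists lam : K, lam ^+ m = 1 /\ P (F j) = lam *: F j.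
Proof.
move=> HP Pm prim m0 x.
have m_gt0 : (0 < m)%N by case: (m) m0 => //; rewrite eqxx.
pose E (j : nat) := \sum_(0 <= k < m) z ^+ (j * k) *: iter k P x.
have z0 : z != 0 by rewrite (prim_root_eq0 prim) -lt0n.
have eig : forall j, z ^+ j *: P (E j) = E j.
  move=> j; rewrite /E Psum // scaler_sumr.
  rewrite -(@shift_sum _ (fun k => z ^+ (j * k) *: iter k P x)); last first.
    by rewrite Pm muln0 expr0 scale1r mulnC exprM (prim_expr_order prim) expr1n scale1r.
  apply: eq_bigr => k _; rewrite PZ // scalerA -exprD /=.
  by rewrite mulnS.
have sumE : \sum_(j < m) E j = m%:R *: x.
  rewrite /E; under eq_bigr do rewrite big_mkord.
  rewrite exchange_big /=.
  case: m m_gt0 Pm prim m0 E eig => // m' _ Pm prim m0 E eig.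
  rewrite big_ord_recl /=.
  under eq_bigr do rewrite muln0 expr0.
  rewrite -scaler_suml sumr_const card_ord -[1 *+ _]/(m'.+1%:R).
  rewrite big1 ?addr0 // => k _.
  under eq_bigr do rewrite mulnC exprM.
  rewrite -scaler_suml.
  have nz1 : z ^+ (bump 0 k) != 1.
    rewrite -(expr0 z) (eq_prim_root_expr prim) mod0n modn_small //.
    by rewrite /bump leq0n add1n // ltnS ltn_ord.
  have : (z ^+ bump 0 k - 1) * \sum_(i < m'.+1) z ^+ bump 0 k ^+ i = 0.
    by rewrite -subrX1 -exprM mulnC exprM (prim_expr_order prim) expr1n subrr.
  move/eqP; rewrite mulf_eq0 subr_eq0 (negbTE nz1) /= => /eqP ->.
  by rewrite scale0r.
exists (fun j : 'I_m => m%:R^-1 *: E j); split.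
  by rewrite -scaler_sumr sumE scalerA mulVf // scale1r.
move=> j; exists (z ^+ j)^-1; split.
  by rewrite exprVn -exprM mulnC exprM (prim_expr_order prim) expr1n invr1.
rewrite PZ // -{2}(eig j) !scalerA; congr (_ *: _).
by rewrite mulrAC mulVf ?mul1r // expf_neq0.
Qed.

Section Alg.
Variable C : numClosedFieldType.

Lemma unit_inv m (a : C) : (0 < m)%N -> a ^+ m = 1 -> a^-1 = a^* /\ a != 0.
Proof.
move=> m0 am.
have n1 : `|a| = 1.
  by apply/eqP; rewrite -(pexpr_eq1 m0) // -normrX am normr1.
split; first by rewrite invC_norm n1 expr1n invr1 mul1r.
by apply/eqP => a0; move: am; rewrite a0 expr0n gtn_eqF //= => /eqP; rewrite eq_sym oner_eq0.
Qed.

Lemma no_opp m (b c : C) : odd m -> b ^+ m = 1 -> c ^+ m = 1 -> b + c = 0 -> False.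
Proof.
move=> om bm cm bc.
have : b = - c by apply/eqP; rewrite -subr_eq0 opprK bc.
move=> eb; move: bm; rewrite eb exprNn cm mulr1 -signr_odd om expr1 => H.
have := @ltr01 C; by rewrite -H oppr_gt0 ltr10.
Qed.

Lemma no_sum m (a b c : C) : odd m -> a ^+ m = 1 -> b ^+ m = 1 -> c ^+ m = 1 ->
  (a + b + c) ^+ m = 1 -> False.
Proof.
move=> om am bm cm.
set d := a + b + c => dm.
have m0 : (0 < m)%N by case: m om {am bm cm dm}.
have [ai a0] := unit_inv _ _ m0 am.
have [bi b0] := unit_inv _ _ m0 bm.
have [ci c0] := unit_inv _ _ m0 cm.
have [di d0] := unit_inv _ _ m0 dm.
have H2 : a^-1 + b^-1 + c^-1 = d^-1 by rewrite ai bi ci di /d !rmorphD.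
have E1 : (a^-1 + b^-1 + c^-1) * (a * b * c * d) = (b * c + a * c + a * b) * d.
  by field; rewrite a0 b0 c0.
have E2 : d^-1 * (a * b * c * d) = a * b * c by field.
have E3 : (b * c + a * c + a * b) * d = a * b * c by rewrite -E1 H2 E2.
have : (d - a) * (d - b) * (d - c) = 0.
  have -> : (d - a) * (d - b) * (d - c) =
     d * (d - (a + b + c)) * d + ((b * c + a * c + a * b) * d - a * b * c) by ring.
  by rewrite E3 !subrr mulr0 !mul0r addr0.
move/eqP; rewrite !mulf_eq0 !subr_eq0 => /orP[/orP[]|] /eqP e.
- by apply: (no_opp _ _ _ om bm cm); apply: (@addrI _ a); rewrite addr0 addrA; exact: e.
- by apply: (no_opp _ _ _ om am cm); apply: (@addrI _ b); rewrite addr0 addrCA addrA; exact: e.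
- by apply: (no_opp _ _ _ om am bm); apply: (@addrI _ c); rewrite addr0 addrC; exact: e.
Qed.
End Alg.

Theorem proposition5p5 (R : realType) (V : vectType R[i]) (br : V -> V -> V) :
  lie_bracket br ->
  ((exists (P : V -> V) (m : nat),
      prederivation br P /\ periodic_of_order P m /\ odd m)
   <-> (forall x y z : V, br x (br y z) = 0)).
Proof.
move=> Hbr; split; last first.
  move=> H0; exists id, 1%N; split; last first.
    split => //; split => //; split => // k /andP[k0 k1].
    by move: k1; rewrite ltnS leqNgt k0.
  split => // x y z; rewrite !H0 !addr0 //.
move=> [P [m [[HP Hpre] [[m0 [Pm _]] om]]]] x y z.
have [ze prim] := @prim_exists R[i] m m0.
have mR : m%:R != 0 :> R[i] by rewrite pnatr_eq0 -lt0n.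
have key : forall (u v w : V) (a b c : R[i]), a ^+ m = 1 -> b ^+ m = 1 -> c ^+ m = 1 ->
    P u = a *: u -> P v = b *: v -> P w = c *: w -> br u (br v w) = 0.
  move=> u v w a b c am bm cm Pu Pv Pw.
  set t := br u (br v w).
  have Pt : P t = (a + b + c) *: t.
    rewrite /t Hpre Pu Pv Pw (@brZl _ _ _ Hbr) (@brZl _ _ _ Hbr).
    by rewrite (@brZr _ _ _ Hbr) (@brZr _ _ _ Hbr) (@brZr _ _ _ Hbr) !scalerDl.
  have It : forall k, iter k P t = (a + b + c) ^+ k *: t.
    elim=> [|k IH] /=; first by rewrite expr0 scale1r.
    by rewrite IH (@PZ _ _ _ HP) Pt scalerA -exprSr.
  have H := Pm t; rewrite It in H.
  case: (eqVneq t 0) => // tn0; exfalso.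
  apply: (no_sum _ _ _ _ _ om am bm cm).
  have : ((a + b + c) ^+ m - 1) *: t = 0 by rewrite scalerBl H scale1r subrr.
  by move/eqP; rewrite scaler_eq0 (negbTE tn0) orbF subr_eq0 => /eqP.
have [F [-> HF]] := decomp _ _ _ _ _ HP Pm prim mR x.
have [G [-> HG]] := decomp _ _ _ _ _ HP Pm prim mR y.
have [H [-> HH]] := decomp _ _ _ _ _ HP Pm prim mR z.
rewrite (@brsuml _ _ _ Hbr); apply: big1 => i _.
rewrite (@brsuml _ _ _ Hbr) (@brsumr _ _ _ Hbr); apply: big1 => j _.
rewrite (@brsumr _ _ _ Hbr) (@brsumr _ _ _ Hbr); apply: big1 => k _.
have [a [am Pa]] := HF i.
have [b [bm Pb]] := HG j.
have [c [cm Pc]] := HH k.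
exact: (key _ _ _ _ _ _ am bm cm Pa Pb Pc).
Qed.
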